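(* For either choice $\zeta\in\{q,-q^3\}$, the function $\bar{\mathcal{F}}(v_1,v_2\mid\lambda_1,\dots,\lambda_{L-1})=\langle\bar0|\mathcal{B}(v_2)\mathcal{B}(v_1)\mathcal{E}(\lambda_{L-1})\cdots\mathcal{E}(\lambda_1)|0\rangle$ can be written as $\bar{\mathcal{F}}(v_1,v_2\mid\lambda_1,\dots,\lambda_{L-1})=\bar\omega(y_2)\,\bar{\mathcal{H}}(v_1,v_2\mid\lambda_1,\dots,\lambda_{L-1})$ with $y_2=e^{2v_2}$, $\bar\omega(y)=\prod_{j=1}^L(y-e^{2\mu_j})$, where $\bar{\mathcal{H}}$ is a polynomial of degree $L-1$ in the variable $y_2$.
   Context: Let $q\in\mathbb{C}\setminus\{0\}$ (with a fixed choice of $q^{1/2}$) and $\zeta\in\{q,-q^3\}$ ($\zeta=q$: Fateev–Zamolodchikov model; $\zeta=-q^3$: Izergin–Korepin model). For $\lambda\in\mathbb{C}$ put $x=e^{2\lambda}$ and define $a(\lambda)=(x-\zeta)(x-q^2)$, $b(\lambda)=q(x-1)(x-\zeta)$, $c(\lambda)=(1-q^2)(x-\zeta)$, $\bar c(\lambda)=x(1-q^2)(x-\zeta)$, and for $\alpha,\beta\in\{1,2,3\}$, with $\beta'=4-\beta$: $d_{\alpha,\beta}(\lambda)=q(x-1)(x-\zeta)+x(q^2-1)(\zeta-1)$ if $\alpha=\beta=2$; $d_{\alpha,\beta}(\lambda)=(x-1)[(x-\zeta)+x(q^2-1)]$ if $\alpha=\beta\neq 2$; $d_{\alpha,\beta}(\lambda)=(q^2-1)[\zeta(x-1)q^{(\alpha-\beta)/2}-\delta_{\alpha,\beta'}(x-\zeta)]$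 if $\alpha<\beta$; $d_{\alpha,\beta}(\lambda)=x(q^2-1)[(x-1)q^{(\alpha-\beta)/2}-\delta_{\alpha,\beta'}(x-\zeta)]$ if $\alpha>\beta$. Let $e_1,e_2,e_3$ be the standard basis of $\mathbb{C}^3$ and $E_{\alpha,\beta}$ the unit matrices. Define $\mathcal{R}(\lambda)\in\mathrm{End}(\mathbb{C}^3\otimes\mathbb{C}^3)$ as the $9\times 9$ matrix in the ordered basis $e_1\otimes e_1,e_1\otimes e_2,e_1\otimes e_3,e_2\otimes e_1,e_2\otimes e_2,e_2\otimes e_3,e_3\otimes e_1,e_3\otimes e_2,e_3\otimes e_3$ (indices $1,\dots,9$) whose only nonzero entries (row, column) are: $(1,1)=a$; $(2,2)=b$, $(2,4)=c$; $(3,3)=d_{1,1}$, $(3,5)=d_{1,2}$, $(3,7)=d_{1,3}$; $(4,2)=\bar c$, $(4,4)=b$; $(5,3)=d_{2,1}$, $(5,5)=d_{2,2}$, $(5,7)=d_{2,3}$; $(6,6)=b$, $(6,8)=c$; $(7,3)=d_{3,1}$, $(7,5)=d_{3,2}$, $(7,7)=d_{3,3}$; $(8,6)=\bar c$, $(8,8)=b$; $(9,9)=a$ (all evaluated at $\lambda$). Fix $L\ge1$ and inhomogeneities $\mu_1,\dots,\mu_L\in\mathbb{C}$. With $V_a=V_1=\dots=V_L=\mathbb{C}^3$, let $\mathcal{T}(\lambda)=\mathcal{R}_{a1}(\lambda-\mu_1)\cdots\mathcal{R}_{aL}(\lambda-\mu_L)$, where $\mathcal{R}_{aj}$ acts as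 $\mathcal{R}$ on $V_a\otimes V_j$. Write $\mathcal{T}(\lambda)=\sum_{\alpha,\beta}E_{\alpha,\beta}\otimes\mathcal{T}_\alpha^\beta(\lambda)$ and set $\mathcal{B}(\lambda)=\mathcal{T}_1^2(\lambda)$, $\mathcal{E}(\lambda)=\mathcal{T}_1^3(\lambda)$, operators on $V_1\otimes\cdots\otimes V_L$. Let $|0\rangle=e_1^{\otimes L}$ and let $\langle\bar0|$ be the dual vector of $e_3^{\otimes L}$. *)

(* Defs.v *)
From HB Require Import structures.
From mathcomp Require Import all_boot all_order all_algebra.
From mathcomp Require Import complex.
From mathcomp Require Import reals sequences exp trigo.
Set Implicit Arguments. Unset Strict Implicit. Unset Printing Implicit Defensive.
Import Order.TTheory GRing.Theory Num.Theory.
Local Open Scope ring_scope.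

Definition cexp (R : realType) (z : R[i]) : R[i] :=
  Complex (expR (complex.Re z) * cos (complex.Im z))
          (expR (complex.Re z) * sin (complex.Im z)).

Section Model.
Variable R : realType.
Local Notation C := (R[i]).
(* q, a fixed square root s = q^{1/2} of q, and zeta *)
Variables (q s zeta : C).

(* the weights d_{alpha,beta}(x), alpha beta in {1,2,3};
   q^{(alpha-beta)/2} = s^(alpha-beta) (integer power) *)
Definition dw (x : C) (al be : nat) : C :=
  if (al == 2%N) && (be == 2%N) then
    q * (x - 1) * (x - zeta) + x * (q ^+ 2 - 1) * (zeta - 1)
  else if al == be then
    (x - 1) * ((x - zeta) + x * (q ^+ 2 - 1))
  else if (al < be)%N then
    (q ^+ 2 - 1) * (zeta * (x - 1) * s ^ (al%:Z - be%:Z)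
                    - (if al == (4 - be)%N then 1 else 0) * (x - zeta))
  else
    x * (q ^+ 2 - 1) * ((x - 1) * s ^ (al%:Z - be%:Z)
                    - (if al == (4 - be)%N then 1 else 0) * (x - zeta)).

Definition aw (x : C) : C := (x - zeta) * (x - q ^+ 2).
Definition bw (x : C) : C := q * (x - 1) * (x - zeta).
Definition cw (x : C) : C := (1 - q ^+ 2) * (x - zeta).
Definition cbw (x : C) : C := x * (1 - q ^+ 2) * (x - zeta).

Definition Rmat (x : C) (r c : nat) : C :=
  match r, c with
  | 1, 1 => aw x
  | 2, 2 => bw x | 2, 4 => cw x
  | 3, 3 => dw x 1 1 | 3, 5 => dw x 1 2 | 3, 7 => dw x 1 3
  | 4, 2 => cbw x | 4, 4 => bw x
  | 5, 3 => dw x 2 1 | 5, 5 => dw x 2 2 | 5, 7 => dw x 2 3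
  | 6, 6 => bw x | 6, 8 => cw x
  | 7, 3 => dw x 3 1 | 7, 5 => dw x 3 2 | 7, 7 => dw x 3 3
  | 8, 6 => cbw x | 8, 8 => bw x
  | 9, 9 => aw x
  | _, _ => 0%R
  end%N.

(* R(lambda) as an operator on V_a (x) V_j: matrix element
   <e_a (x) e_i | R | e_b (x) e_j>, with a,i,b,j in 'I_3 standing for 1,2,3;
   basis index of e_a (x) e_i is 3a + i + 1. *)
Definition Rent (lam : C) (a i b j : 'I_3) : C :=
  Rmat (cexp (2%:R * lam)) (3 * a + i + 1) (3 * b + j + 1).

(* Matrix elements of the monodromy T(lambda) = R_{a1}(lambda-mu_1)...R_{aL}(lambda-mu_L):
   mono mus lam al be ii jj = <e_al (x) e_ii | T | e_be (x) e_jj>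
   (the quantum-space part being the operator T_al^be). *)
Fixpoint mono (mus : seq C) (lam : C) (al be : 'I_3) (ii jj : seq 'I_3) : C :=
  match mus, ii, jj with
  | [::], [::], [::] => if al == be then 1 else 0
  | mu :: mus', i :: ii', j :: jj' =>
      \sum_(k < 3) Rent (lam - mu) al i k j * mono mus' lam k be ii' jj'
  | _, _, _ => 0
  end.

Variable L : nat.
Variable mu : 'I_L -> C.
Definition mus : seq C := [seq mu j | j <- enum 'I_L].

Definition state := (L.-tuple 'I_3)%type.
Definition vec := state -> C.
Definition op := state -> state -> C.

Definition Top (al be : 'I_3) (lam : C) : op :=
  fun st st' => mono mus lam al be st st'.
Definition Bop (lam : C) : op := Top 0 1 lam.
Definition Eop (lam : C) : op := Top 0 2 lam.

Definition apply (A : op) (v : vec) : vec := fun st => \sum_(st' : state) A st st' * v st'.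

(* |0> = e_1^{(x) L} ; <0bar| = dual of e_3^{(x) L} *)
Definition vac : vec := fun st => if st == [tuple of nseq L (0 : 'I_3)] then 1 else 0.
Definition dualvac (v : vec) : C := v [tuple of nseq L (2 : 'I_3)].

Definition Fbar (v1 v2 : C) (lam : 'I_L.-1 -> C) : C :=
  dualvac (apply (Bop v2) (apply (Bop v1)
    (foldl (fun v l => apply (Eop l) v) vac [seq lam j | j <- enum 'I_L.-1]))).

Definition omegabar : {poly C} := \prod_(j < L) ('X - (cexp (2%:R * mu j))%:P).

End Model.

(* Main.v *)
Require Import Defs.
From HB Require Import structures.
From mathcomp Require Import all_boot all_order all_algebra.
From mathcomp Require Import complex.
From mathcomp Require Import reals sequences exp trigo.
From mathcomp Require Import ring zify.
Import Order.TTheory GRing.Theory Num.Theory.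
Local Open Scope ring_scope.
Set Implicit Arguments. Unset Strict Implicit.

Section S.
Variable R : realType.
Local Notation C := (R[i]).

Lemma cexpD (a b : C) : cexp (a + b) = cexp a * cexp b.
Proof.
case: a => a1 a2; case: b => b1 b2; rewrite /cexp /=.
congr Complex; rewrite ?expRD ?cosD ?sinD; ring.
Qed.

Lemma cexp0 : cexp (0 : C) = 1.
Proof. by rewrite /cexp /= expR0 cos0 sin0 mulr1 mulr0. Qed.

Lemma cexp_neq0 (a : C) : cexp a != 0.
Proof.
apply/negP => /eqP H.
have := cexpD a (- a); rewrite subrr cexp0 H mul0r => /eqP; by rewrite oner_eq0.
Qed.

Definition pf (k : nat) (f : C -> C) :=
  exists p : {poly C}, (size p <= k)%N /\ forall y, f y = p.[y].

Lemma pf_ext k f g : pf k f -> (forall y, f y = g y) -> pf k g.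
Proof. by case=> p [Hs Hp] E; exists p; split=> // y; rewrite -E. Qed.

Lemma pf_weak k l f : (k <= l)%N -> pf k f -> pf l f.
Proof. by move=> kl [p [Hs Hp]]; exists p; split=> //; apply: leq_trans kl. Qed.

Lemma pf_const c : pf 1 (fun _ => c).
Proof. by exists c%:P; split; [rewrite size_polyC; case: (c != 0) | move=> y; rewrite hornerC]. Qed.

Lemma pf_lin a b : pf 2 (fun y => a * y + b).
Proof.
exists (a%:P * 'X + b%:P); split; last by move=> y; rewrite hornerD hornerMX !hornerC.
rewrite size_MXaddC; case: ifP => // _; rewrite size_polyC; by case: (a != 0).
Qed.

Lemma pf_mul m n f g : pf m f -> pf n g -> pf (m + n).-1 (fun y => f y * g y).
Proof.
case=> p [Hp Ep] [r [Hr Er]]; exists (p * r); split; last by move=> y; rewrite hornerM Ep Er.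
apply: leq_trans (size_polyMleq _ _) _.
by rewrite -!subn1 leq_sub2r // leq_add.
Qed.

Lemma pf_add n f g : pf n f -> pf n g -> pf n (fun y => f y + g y).
Proof.
case=> p [Hp Ep] [r [Hr Er]]; exists (p + r); split; last by move=> y; rewrite hornerD Ep Er.
by apply: leq_trans (size_polyD _ _) _; rewrite geq_max Hp Hr.
Qed.

Lemma pf0 n : pf n (fun _ => 0).
Proof. by exists 0; split; rewrite ?size_poly0 // => y; rewrite horner0. Qed.

Variables (q s zeta : C).

Lemma sum3 (F : 'I_3 -> C) : \sum_(k < 3) F k = F 0 + F 1 + F 2.
Proof.
rewrite !big_ord_recl big_ord0 addr0 addrA.
by congr (F _ + F _ + F _); apply/val_inj.
Qed.

Local Notation X lam := (cexp (2%:R * lam)).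

Lemma R2_0 lam j : Rent q s zeta lam 2 2 0 j = 0.
Proof. by case: j => [[|[|[|j]]] Hj] //; reflexivity. Qed.
Lemma R2_1 lam j : Rent q s zeta lam 2 2 1 j = 0.
Proof. by case: j => [[|[|[|j]]] Hj] //; reflexivity. Qed.
Lemma R1_0 lam j : Rent q s zeta lam 1 2 0 j = 0.
Proof. by case: j => [[|[|[|j]]] Hj] //; reflexivity. Qed.
Lemma R1_1 lam j : Rent q s zeta lam 1 2 1 j = if val j == 2%N then bw q zeta (X lam) else 0.
Proof. by case: j => [[|[|[|j]]] Hj] //; reflexivity. Qed.
Lemma R0_0 lam j : Rent q s zeta lam 0 2 0 j = if val j == 2%N then dw q s zeta (X lam) 1 1 else 0.
Proof. by case: j => [[|[|[|j]]] Hj] //; reflexivity. Qed.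
Lemma R0_1 lam j : Rent q s zeta lam 0 2 1 j = if val j == 1%N then dw q s zeta (X lam) 1 2 else 0.
Proof. by case: j => [[|[|[|j]]] Hj] //; reflexivity. Qed.

Lemma mono_cons m ms lam al be i ii j jj :
  mono q s zeta (m :: ms) lam al be (i :: ii) (j :: jj) =
  \sum_(k < 3) Rent q s zeta (lam - m) al i k j * mono q s zeta ms lam k be ii jj.
Proof. by []. Qed.


Lemma xy (lam m : C) : X (lam - m) = X lam / X m.
Proof.
have -> : X lam = X (lam - m) * X m by rewrite -cexpD; congr cexp; ring.
by rewrite mulfK // cexp_neq0.
Qed.

Definition Wl (ms : seq C) (y : C) := \prod_(m <- ms) (y - X m).

Lemma main ms : forall jj,
  (forall lam, mono q s zeta ms lam 2 1 (nseq (size ms) 2) jj = 0) /\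
  (exists f, pf (size ms).+1 f /\ forall lam,
     mono q s zeta ms lam 1 1 (nseq (size ms) 2) jj = Wl ms (X lam) * f (X lam)) /\
  (exists f, pf (size ms) f /\ forall lam,
     mono q s zeta ms lam 0 1 (nseq (size ms) 2) jj = Wl ms (X lam) * f (X lam)).
Proof.
elim: ms => [|m ms IH] [|j jj].
- split; first by move=> lam; reflexivity.
  split; first by exists (fun _ => 1); split; [apply: pf_const | move=> lam; rewrite /Wl big_nil mulr1; reflexivity].
  by exists (fun _ => 0); split; [apply: pf0 | move=> lam; rewrite mulr0; reflexivity].
- split; first by [].
  split; by exists (fun _ => 0); split; [apply: pf0 | move=> lam; rewrite mulr0].
- split; first by [].
  split; by exists (fun _ => 0); split; [apply: pf0 | move=> lam; rewrite mulr0].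
have [IHa [[f1 [pf1 E1]] [f0 [pf0' E0]]]] := IH jj.
have -> : nseq (size (m :: ms)) (2:'I_3) = 2 :: nseq (size ms) 2 by [].
have em := cexp_neq0 (2%:R * m).
have WE y : Wl (m :: ms) y = (y - X m) * Wl ms y by rewrite /Wl big_cons.
split.
  by move=> lam; rewrite mono_cons sum3 R2_0 R2_1 IHa !mul0r mulr0 !addr0.
split.
  move: j => [[|[|[|j]]] Hj] //.
  - exists (fun _ => 0); split; first exact: pf0.
    move=> lam; rewrite mono_cons sum3 R1_0 R1_1 IHa /=; rewrite !mulr0 !mul0r; ring.
  - exists (fun _ => 0); split; first exact: pf0.
    move=> lam; rewrite mono_cons sum3 R1_0 R1_1 IHa /=; rewrite !mulr0 !mul0r; ring.
  exists (fun y => (q / X m / X m * y + - (q / X m * zeta)) * f1 y); split.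
    by apply: pf_weak (pf_mul (pf_lin _ _) pf1).
  move=> lam; rewrite mono_cons sum3 R1_0 R1_1 IHa /= E1 WE /bw xy.
  field; exact: em.
move: j => [[|[|[|j]]] Hj] //.
- exists (fun _ => 0); split; first exact: pf0.
  move=> lam; rewrite mono_cons sum3 R0_0 R0_1 IHa /=; rewrite !mulr0 !mul0r; ring.
- exists (fun y => (q ^+ 2 - 1) * zeta * s ^ (1%:Z - 2%:Z) / X m * f1 y); split.
    by apply: pf_weak (pf_mul (pf_const _) pf1).
  move=> lam; rewrite mono_cons sum3 R0_0 R0_1 IHa /= E1 WE /dw /= xy.
  set t := s ^ _; field; exact: em.
exists (fun y => (q ^+ 2 / X m / X m * y + - (zeta / X m)) * f0 y); split.
  by apply: pf_weak (pf_mul (pf_lin _ _) pf0').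
move=> lam; rewrite mono_cons sum3 R0_0 R0_1 IHa /= E0 WE /dw /= xy.
field; exact: em.
Qed.


Lemma sum_pf (I : Type) (r : seq I) n (G : I -> C -> C) (W Y : C -> C) (c : I -> C) :
  (forall i, exists f, pf n f /\ forall lam, G i lam = W lam * f (Y lam)) ->
  exists f, pf n f /\ forall lam, \sum_(i <- r) G i lam * c i = W lam * f (Y lam).
Proof.
move=> H; elim: r => [|i r [f [pff Ef]]].
  by exists (fun _ => 0); split; [apply: pf0 | move=> lam; rewrite big_nil mulr0].
have [g [pfg Eg]] := H i.
exists (fun y => g y * c i + f y); split.
  apply: pf_add => //; apply: pf_weak (pf_mul pfg (pf_const (c i))).
  by rewrite addn1.
by move=> lam; rewrite big_cons Eg Ef; ring.
Qed.

End S.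

Unset Implicit Arguments.
Set Strict Implicit.

Theorem corollary2p6 (R : realType) (q s zeta : R[i]) (L : nat)
    (mu : 'I_L -> R[i]) (v1 : R[i]) (lam : 'I_L.-1 -> R[i]) :
  q != 0 -> s ^+ 2 = q -> (zeta = q \/ zeta = - q ^+ 3) -> (1 <= L)%N ->
  exists H : {poly R[i]},
    (size H <= L)%N /\
    forall v2 : R[i],
      Fbar q s zeta mu v1 v2 lam
      = (omegabar mu).[cexp (2%:R * v2)] * H.[cexp (2%:R * v2)].
Proof.
move=> _ _ _ _.
pose w := Defs.apply (Bop q s zeta mu v1) (foldl (fun v l => Defs.apply (Eop q s zeta mu l) v) (@vac R L) [seq lam j | j <- enum 'I_L.-1]).
have szm : size (mus mu) = L by rewrite size_map size_enum_ord.
have := @sum_pf R _ (index_enum (state L)) L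
  (fun st v2 => Bop q s zeta mu v2 [tuple of nseq L (2 : 'I_3)] st)
  (fun v2 => Wl (mus mu) (cexp (2%:R * v2))) (fun v2 => cexp (2%:R * v2)) w.
case.
  move=> st; have [_ [_ [f [pff Ef]]]] := main q s zeta (mus mu) st.
  exists f; split; first by rewrite -szm.
  by move=> v2; rewrite /Bop /Top /= -Ef szm.
move=> f [[H [sH EH]] Ef]; exists H; split => // v2.
rewrite /Fbar /dualvac -/w {1}/apply -EH.
have -> : (omegabar mu).[cexp (2%:R * v2)] = Wl (mus mu) (cexp (2%:R * v2)).
  by rewrite /omegabar horner_prod /Wl /mus big_map big_enum /=; apply: eq_bigr => j _; rewrite hornerXsubC.
by rewrite -Ef.
Qed.
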